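(* The Petersen graph has ID-index $3$.
   Context: For a finite simple connected graph $G=(V,E)$ with diameter $d$, a rank assignment is a function $f:V\to\mathbb{R}$; under $f$, the string of a vertex $v$ is the $d$-vector whose $i$-th coordinate is the sum of $f(w)$ over all vertices $w$ with $d(v,w)=i$. The ID-index $IDI(G)$ is the minimum $k$ such that there exists $f:V\to\mathbb{R}$ with $|f(V)|=k$ under which all vertices have distinct strings. *)

(* Defs.v *)
From HB Require Import structures.
From mathcomp Require Import all_boot all_order all_algebra.
From mathcomp Require Import reals.
Set Implicit Arguments. Unset Strict Implicit. Unset Printing Implicit Defensive.
Import Order.TTheory GRing.Theory Num.Theory.

Definition simple_graph (T : finType) (e : rel T) : Prop :=
  symmetric e /\ irreflexive e.

Fixpoint ball (T : finType) (e : rel T) (x : T) (n : nat) : {set T} :=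
  match n with
  | 0 => [set x]
  | n'.+1 => ball e x n' :|: [set y | [exists z in ball e x n', e z y]]
  end.

Definition connected_graph (T : finType) (e : rel T) : Prop :=
  forall x y : T, connect e x y.

(* Graph distance: the least n with y in ball e x n (for a connected graph on
   #|T| vertices every distance is < #|T|; unreachable pairs get #|T|). *)
Definition gdist (T : finType) (e : rel T) (x y : T) : nat :=
  find (fun n => y \in ball e x n) (iota 0 #|T|).

Definition diameter (T : finType) (e : rel T) : nat :=
  \max_(p : T * T) gdist e p.1 p.2.

Definition vstring (R : realType) (T : finType) (e : rel T) (f : T -> R) (v : T)
  : seq R :=
  [seq (\sum_(w : T | gdist e v w == i) f w)%R | i <- iota 1 (diameter e)].

Definition nvalues (R : realType) (T : finType) (f : T -> R) : nat :=
  size (undup [seq f v | v <- enum T]).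

Definition identifying (R : realType) (T : finType) (e : rel T) (f : T -> R) : Prop :=
  injective (vstring e f).

Definition IDI_is (R : realType) (T : finType) (e : rel T) (k : nat) : Prop :=
  (exists f : T -> R, identifying e f /\ nvalues f = k) /\
  (forall f : T -> R, identifying e f -> k <= nvalues f).

(* Petersen graph: Kneser graph K(5,2): 2-subsets of {0,...,4},
   adjacent iff disjoint. *)
Definition pvertex := {A : {set 'I_5} | #|A| == 2}.
Definition petersen_adj : rel pvertex :=
  fun A B => [disjoint (val A) & (val B)].

(* Main.v *)
Require Import Defs.
From mathcomp Require Import all_boot all_order all_algebra.
From mathcomp Require Import reals.
Set Implicit Arguments. Unset Strict Implicit. Unset Printing Implicit Defensive.
Import Order.TTheory GRing.Theory Num.Theory.

Arguments ball : simpl never.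

Definition pairs : seq (nat * nat) :=
  [:: (0,1);(0,2);(0,3);(0,4);(1,2);(1,3);(1,4);(2,3);(2,4);(3,4)]%N.
Definition pa (i : nat) : nat := (nth (0,0)%N pairs i).1.
Definition pb (i : nat) : nat := (nth (0,0)%N pairs i).2.
Definition memN (i x : nat) : bool := (x == pa i) || (x == pb i).
Definition adjN (i j : nat) : bool := ~~ has (fun x => memN i x && memN j x) (iota 0 5).
Definition ddN (i j : nat) : nat := if i == j then 0 else if adjN i j then 1 else 2.
Definition idxN (x y : nat) : nat :=
  find (fun p => ((p.1 == x) && (p.2 == y)) || ((p.1 == y) && (p.2 == x))) pairs.

Lemma K1 : all (fun i => [&& pa i < 5, pb i < 5 & pa i != pb i]) (iota 0 10).
Proof. by vm_compute. Qed.
Lemma K2 : all (fun i => all (fun j => all (fun z => memN i z == memN j z) (iota 0 5) ==> (i == j)) (iota 0 10)) (iota 0 10).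
Proof. by vm_compute. Qed.
Lemma K3 : all (fun x => all (fun y => (x != y) ==> ((idxN x y < 10) && all (fun z => memN (idxN x y) z == ((z == x) || (z == y))) (iota 0 5))) (iota 0 5)) (iota 0 5).
Proof. by vm_compute. Qed.
Lemma K5 : all (fun i => all (fun j => (ddN i j == 2) ==> has (fun k => adjN i k && adjN k j) (iota 0 10)) (iota 0 10)) (iota 0 10).
Proof. by vm_compute. Qed.

Lemma iota_ord n (i : 'I_n) : val i \in iota 0 n.
Proof. by rewrite mem_iota ltn_ord. Qed.

Lemma phi_card (i : 'I_10) : #|[set (inord (pa i) : 'I_5); inord (pb i)]| == 2.
Proof.
have /and3P [ha hb hab] := allP K1 _ (iota_ord i).
suff H : (inord (pa i) : 'I_5) != inord (pb i) by rewrite cards2 H.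
by apply/eqP => /(congr1 (@nat_of_ord 5)); rewrite !inordK //; apply/eqP.
Qed.

Definition phi (i : 'I_10) : pvertex := exist (fun A : {set 'I_5} => #|A| == 2) _ (phi_card i).

Lemma mem_phi (i : 'I_10) (z : 'I_5) : (z \in val (phi i)) = memN i z.
Proof.
have /and3P [ha hb hab] := allP K1 _ (iota_ord i).
by rewrite /= !inE -!val_eqE /= !inordK.
Qed.

Lemma phi_inj : injective phi.
Proof.
move=> i j /(congr1 val) /setP H; apply/val_eqP => /=.
have := allP (allP K2 _ (iota_ord i)) _ (iota_ord j); move/implyP; apply.
apply/allP => x; rewrite mem_iota /= => hx.
have := H (Ordinal hx); rewrite !mem_phi /= => ->; exact: eqxx.
Qed.

Lemma phi_surj (v : pvertex) : exists i, phi i = v.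
Proof.
case: v => A HA; case/cards2P: (HA) => x [y [xy HAe]].
have := allP (allP K3 _ (iota_ord x)) _ (iota_ord y).
rewrite val_eqE xy implyTb => /andP [hk Hk].
exists (Ordinal hk); apply: val_inj => /=; rewrite [RHS]HAe; apply/setP => z.
have := mem_phi (Ordinal hk) z; rewrite /= => ->; rewrite !inE -!val_eqE.
by have /eqP := allP Hk _ (iota_ord z).
Qed.

Definition psi (v : pvertex) : 'I_10 := odflt ord0 [pick i | phi i == v].

Lemma phiK : cancel phi psi.
Proof.
move=> i; rewrite /psi; case: pickP => [j /eqP /phi_inj //|H].
by have := H i; rewrite eqxx.
Qed.

Lemma psiK : cancel psi phi.
Proof.
move=> v; rewrite /psi; case: pickP => [j /eqP //|H].
by case: (phi_surj v) => i Hi; have := H i; rewrite Hi eqxx.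
Qed.

Lemma phi_bij : bijective phi.
Proof. exact: Bijective phiK psiK. Qed.

Lemma card_pv : #|{: pvertex}| = 10.
Proof. by rewrite -(bij_eq_card phi_bij) card_ord. Qed.

Lemma adj_phi (i j : 'I_10) : petersen_adj (phi i) (phi j) = adjN i j.
Proof.
rewrite /petersen_adj /adjN; apply/pred0P/hasPn => [H x|H z].
  rewrite mem_iota => /andP [_ hx].
  by move: (H (Ordinal hx)) => /=; rewrite !mem_phi /= => ->.
by rewrite /= !mem_phi; apply/negbTE; apply: H; apply: iota_ord.
Qed.

Definition dd (v w : pvertex) : nat := if v == w then 0 else if petersen_adj v w then 1 else 2.

Lemma dd_phi (i j : 'I_10) : dd (phi i) (phi j) = ddN i j.
Proof. by rewrite /dd /ddN (inj_eq phi_inj) adj_phi. Qed.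

Lemma common_nb (v w : pvertex) : dd v w = 2 ->
  exists z, petersen_adj v z && petersen_adj z w.
Proof.
rewrite -(psiK v) -(psiK w) dd_phi => H.
have := allP (allP K5 _ (iota_ord (psi v))) _ (iota_ord (psi w)).
rewrite H eqxx implyTb => /hasP [k]; rewrite mem_iota => /andP [_ hk] Hk.
by exists (phi (Ordinal hk)); rewrite !adj_phi.
Qed.

Lemma ball0 (T : finType) (e : rel T) x : ball e x 0 = [set x].
Proof. by []. Qed.
Lemma ballS (T : finType) (e : rel T) x n :
  ball e x n.+1 = ball e x n :|: [set y | [exists z in ball e x n, e z y]].
Proof. by []. Qed.

Lemma b1 (v w : pvertex) : (w \in ball petersen_adj v 1) = (w == v) || petersen_adj v w.
Proof.
rewrite ballS ball0 !inE; congr (_ || _).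
apply/existsP/idP => [[z /andP [/set1P -> //]] | H].
by exists v; rewrite inE eqxx.
Qed.

Lemma b2 (v w : pvertex) : w \in ball petersen_adj v 2.
Proof.
rewrite ballS inE b1.
case E : ((w == v) || petersen_adj v w) => //=.
have : dd v w = 2 by rewrite /dd eq_sym; move: E; case: (w == v) => //=; case: (petersen_adj v w).
case/common_nb => z /andP [h1 h2].
by rewrite inE; apply/existsP; exists z; rewrite b1 h1 orbT.
Qed.

Lemma gdist_dd (v w : pvertex) : gdist petersen_adj v w = dd v w.
Proof.
rewrite /gdist card_pv /=.
rewrite ball0 inE b1 b2 /dd eq_sym.
by case: (v == w) => //=; case: (petersen_adj v w).
Qed.

Lemma diam2 : diameter petersen_adj = 2.
Proof.
apply/eqP; rewrite eqn_leq; apply/andP; split.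
  apply/bigmax_leqP => p _; rewrite gdist_dd /dd.
  by case: (_ == _) => //; case: (petersen_adj _ _).
have := leq_bigmax (F := fun p : pvertex * pvertex => gdist petersen_adj p.1 p.2) (phi ord0, phi (inord 1)).
by rewrite /= gdist_dd dd_phi inordK.
Qed.

Definition sumF (FN : nat -> nat) (i k : nat) : nat :=
  sumn (map FN (filter (fun j => ddN i j == k) (iota 0 10))).

Lemma sum_pv (F : pvertex -> nat) (FN : nat -> nat)
  (HF : forall j : 'I_10, F (phi j) = FN j) (i : 'I_10) k :
  \sum_(w | dd (phi i) w == k) F w = sumF FN i k.
Proof.
rewrite (reindex phi) /=; last exact: onW_bij phi_bij.
rewrite (eq_big (fun j : 'I_10 => ddN i j == k) (fun j : 'I_10 => FN j)); last 2 first.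
- by move=> j; rewrite dd_phi.
- by move=> j _; exact: HF.
rewrite -(big_mkord (fun j => ddN i j == k) FN).
by rewrite /sumF sumnE big_map big_filter.
Qed.

Definition gN (j : nat) : nat := nth 0 [:: 0;0;0;1;0;1;2;2;0;2] j.

Lemma K4 : all (fun i => all (fun j => ((sumF gN i 1 == sumF gN j 1) && (sumF gN i 2 == sumF gN j 2)) ==> (i == j)) (iota 0 10)) (iota 0 10).
Proof. by vm_compute. Qed.
Lemma K6 : all (fun i => sumF (fun _ => 1) i 1 == 3) (iota 0 10).
Proof. by vm_compute. Qed.
Lemma K7 : all (fun j => gN j <= 2) (iota 0 10).
Proof. by vm_compute. Qed.

Lemma vstringE (R : realType) (f : pvertex -> R) v :
  vstring petersen_adj f v =
  [:: (\sum_(w | dd v w == 1%N) f w)%R; (\sum_(w | dd v w == 2%N) f w)%R].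
Proof.
rewrite /vstring diam2 /=; congr [:: _; _]; apply: eq_bigl => w; by rewrite gdist_dd.
Qed.

Lemma total (R : realType) (F : pvertex -> R) v :
  (\sum_u F u = F v + \sum_(w | dd v w == 1%N) F w + \sum_(w | dd v w == 2%N) F w)%R.
Proof.
rewrite (bigD1 v) //= (bigID (fun w => dd v w == 1)) /= addrA.
congr (_ + _ + _)%R; apply: eq_bigl => w; rewrite /dd [w == v]eq_sym;
  case: (v == w) => //=; case: (petersen_adj v w) => //=; vm_compute; reflexivity.
Qed.

Lemma two_vals (R : realType) (f : pvertex -> R) a b :
  (forall v, f v = a \/ f v = b) -> identifying petersen_adj f -> False.
Proof.
move=> Hab Hid.
pose X w := (f w == b).
have Hf w : (f w = (1%N)%:R * a + (X w : nat)%:R * (b - a))%R.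
  rewrite /X; case: eqP => [->|/eqP nb] /=.
    by rewrite !mul1r addrC subrK.
  case: (Hab w) => [->|Hb]; last by rewrite Hb eqxx in nb.
  by rewrite mul1r mul0r addr0.
pose c v := \sum_(w | dd v w == 1) (X w : nat).
pose N v := \sum_(w | dd v w == 1) 1%N.
have HN v : N v = 3.
  rewrite /N; case: (phi_surj v) => i <-.
  rewrite (sum_pv (FN := fun _ => 1%N)) //; apply/eqP; exact: (allP K6 _ (iota_ord i)).
have Hs1 v : (\sum_(w | dd v w == 1%N) f w = (N v)%:R * a + (c v)%:R * (b - a))%R.
  by rewrite (eq_bigr _ (fun w _ => Hf w)) big_split /= -!mulr_suml -!natr_sum.
have Hc v : c v < 4.
  rewrite ltnS -(HN v); apply: leq_sum => w _; exact: leq_b1.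
pose key v : bool * 'I_4 := (X v, Ordinal (Hc v)).
have key_inj : injective key.
  move=> v w [HX Hcv]; apply: Hid; rewrite !vstringE.
  have Hfv : f v = f w by rewrite (Hf v) (Hf w) HX.
  have H1 : (\sum_(u | dd v u == 1%N) f u = \sum_(u | dd w u == 1%N) f u)%R.
    by rewrite !Hs1 !HN Hcv.
  have E := total f v; rewrite (total f w) Hfv H1 in E.
  by move/addrI: E => ->; rewrite H1.
have := leq_card key key_inj; rewrite card_pv card_prod card_bool card_ord.
by [].
Qed.

Theorem mainTheorem10 (R : realType) :
  IDI_is R petersen_adj 3.
Proof.
split.
  pose f (v : pvertex) : R := (gN (psi v))%:R%R.
  have fphi j : f (phi j) = (gN j)%:R%R by rewrite /f phiK.
  exists f; split.
    move=> v w; case: (phi_surj v) => i <-; case: (phi_surj w) => j <-.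
    rewrite !vstringE -!(eq_bigr _ (fun u _ => erefl (f u))).
    have Hs (k : nat) (l : 'I_10) : (\sum_(u | dd (phi l) u == k) f u = (sumF gN l k)%:R)%R.
      by rewrite -(sum_pv (F := fun u => gN (psi u))) ?natr_sum // => m; rewrite phiK.
    rewrite !Hs => -[/eqP h1 /eqP h2].
    rewrite !eqr_nat in h1 h2.
    have := allP (allP K4 _ (iota_ord i)) _ (iota_ord j).
    by rewrite h1 h2 implyTb => /eqP /val_inj ->.
  rewrite /nvalues.
  have P : perm_eq (undup [seq f v | v <- enum {: pvertex}]) [seq (n%:R%R : R) | n <- [:: 0; 1; 2]%N].
    apply: uniq_perm; first exact: undup_uniq.
      by rewrite map_inj_uniq // => m n /eqP; rewrite eqr_nat => /eqP.
    move=> x; rewrite mem_undup; apply/mapP/mapP => [[v _ ->]|[n Hn ->]].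
      exists (gN (psi v)) => //.
      have := allP K7 _ (iota_ord (psi v)).
      by case: (gN _) => [|[|[|]]].
    move: Hn; rewrite !inE => /or3P [/eqP->|/eqP->|/eqP->].
    - by exists (phi (inord 0)); rewrite ?mem_enum // fphi inordK.
    - by exists (phi (inord 3)); rewrite ?mem_enum // fphi inordK.
    - by exists (phi (inord 6)); rewrite ?mem_enum // fphi inordK.
  by rewrite (perm_size P).
move=> f Hid; rewrite /nvalues leqNgt; apply/negP.
set s := undup _.
have Hin v : f v \in s by rewrite /s mem_undup map_f // mem_enum.
clearbody s; case: s Hin => [|a [|b [|c s]]] //= Hin _.
- by have := Hin (phi ord0).
- apply: (@two_vals R f a a) Hid => v; left; move: (Hin v); rewrite inE => /eqP.
  done.
- apply: (@two_vals R f a b) Hid => v; move: (Hin v); rewrite !inE => /orP [/eqP|/eqP]; [left|right]; done.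
Qed.
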